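(* In the setting of the context, for all triples $(T,L,v)\in\{1,\ldots,L\}\times\mathbb N_+\times[0.5,1)$ and any $u_{\mathrm{cut}}\in\{1,\ldots,p-1\}$, $$V^+_{T,L}(v,\rho_{\mathrm{thr}}(u_{\mathrm{cut}}+1))\ge V^+_{T,L}(v,\rho_{\mathrm{thr}}(u_{\mathrm{cut}})).$$
   Context: Data: $\boldsymbol X=[\boldsymbol x_1\cdots\boldsymbol x_p]\in\mathbb R^{n\times p}$ with standardized columns, $\boldsymbol y\in\mathbb R^n$; an unknown active set $\mathcal A\subseteq\{1,\ldots,p\}$, the remaining variables being null. T-Rex framework: fix $K,L\ge1$, $T\in\{1,\ldots,L\}$; for $k=1,\ldots,K$ append a dummy matrix $\mathring{\boldsymbol X}_k\in\mathbb R^{n\times L}$ (i.i.d. entries from a univariate distribution with finite mean and variance), run a forward selection method (at most one variable per iteration) on $(\boldsymbol y,[\boldsymbol X\ \mathring{\boldsymbol X}_k])$ and terminate once $T$ dummies are included; $\mathcal C_{k,L}(T)$ = original variables included before termination; $\Phi_{T,L}(j)=\frac1K\sum_k\mathbb 1\{j\in\mathcal C_{k,L}(T)\}$. Dendrogram groups: with $\rho_{j,j'}=\boldsymbol x_j^\top\boldsymbol x_{j'}$, agglomerative hierarchical clustering with distance $1-|\rho|$ (single, complete, or average linkage) gives merge heights $c_1\ge\cdots\ge c_{p-1}$; set $c_0=1$, $c_p=0$, $\rho_{\mathrm{thr}}(u)=1-c_u$ for $u=1,\ldots,p$; $\mathrm{Gr}(j,\rho_{\mathrm{thr}}(u_{\mathrm{cut}}))$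 is the set of $j'\neq j$ in the same cluster as $j$ when the dendrogram is cut at distance $1-\rho_{\mathrm{thr}}(u_{\mathrm{cut}})$. Define $\Psi^+_{T,L}(j,\rho)=\big(2-\min_{j'\in\mathrm{Gr}(j,\rho)}|\Phi_{T,L}(j)-\Phi_{T,L}(j')|\big)^{-1}$ if $\mathrm{Gr}(j,\rho)\ne\varnothing$ and $\Psi^+_{T,L}(j,\rho)=1$ otherwise, and $$V^+_{T,L}(v,\rho)=\big|\{\text{null } j:\Psi^+_{T,L}(j,\rho)\cdot\Phi_{T,L}(j)>v\}\big|.$$ *)

(* Defs.v *)
From HB Require Import structures.
From mathcomp Require Import all_boot all_order all_algebra.
Set Implicit Arguments. Unset Strict Implicit. Unset Printing Implicit Defensive.
Import Order.TTheory GRing.Theory Num.Theory.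
Local Open Scope ring_scope.

Section TRex.
Variable R : realFieldType.

Definition fmax (T : finType) (S : {set T}) (f : T -> R) : R :=
  \big[Order.max/0]_(i in S) f i.

(* exact minimum of f over a finite set S (meaningful when S is nonempty):
   the seed fmax S f is >= every f i, so it never wins on a nonempty S *)
Definition fmin (T : finType) (S : {set T}) (f : T -> R) : R :=
  \big[Order.min/fmax S f]_(i in S) f i.

Variables (n p : nat).

Definition rho (X : 'M[R]_(n, p)) (j j' : 'I_p) : R := \sum_(i < n) X i j * X i j'.

(* standardized columns: centered with unit Euclidean norm, so that
   x_j^T x_j' is the sample correlation *)
Definition standardized (X : 'M[R]_(n, p)) : Prop :=
  forall j : 'I_p, \sum_(i < n) X i j = 0 /\ rho X j j = 1.

Inductive linkage := Single | Complete | Average.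

Definition dist (X : 'M[R]_(n, p)) (j j' : 'I_p) : R := 1 - `|rho X j j'|.

Definition link (lk : linkage) (X : 'M[R]_(n, p)) (A B : {set 'I_p}) : R :=
  match lk with
  | Single => fmin (setX A B) (fun q => dist X q.1 q.2)
  | Complete => fmax (setX A B) (fun q => dist X q.1 q.2)
  | Average => (\sum_(q in setX A B) dist X q.1 q.2) / (#|A| * #|B|)%:R
  end.

(* parts i = the partition after i merges, h i = height of the i-th merge
   (i = 1 .. p-1); each step merges two distinct clusters of minimal linkage *)
Definition agglo_run (lk : linkage) (X : 'M[R]_(n, p))
    (parts : nat -> {set {set 'I_p}}) (h : nat -> R) : Prop :=
  parts 0%N = [set [set j] | j : 'I_p] /\
  forall i : nat, (i < p.-1)%N ->
    exists A B : {set 'I_p},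
      [/\ [&& A \in parts i, B \in parts i & A != B],
          (forall A' B', A' \in parts i -> B' \in parts i -> A' != B' ->
             link lk X A B <= link lk X A' B'),
          parts i.+1 = (A :|: B) |: ((parts i :\ A) :\ B)
        & h i.+1 = link lk X A B].

(* merge heights sorted decreasingly: c_1 >= ... >= c_{p-1}; c_0 = 1, c_p = 0 *)
Definition heights (h : nat -> R) : seq R := [seq h i.+1 | i <- iota 0 p.-1].

Definition cval (h : nat -> R) (u : nat) : R :=
  if u == 0%N then 1
  else if (p <= u)%N then 0
  else nth 0 (sort (fun a b => b <= a) (heights h)) u.-1.

Definition rho_thr (h : nat -> R) (u : nat) : R := 1 - cval h u.

(* cutting the dendrogram at distance t: perform all merges of height <= t *)
Definition same_cluster (parts : nat -> {set {set 'I_p}}) (h : nat -> R)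
    (t : R) (j j' : 'I_p) : bool :=
  (* the number i of merges performed ranges over 0 .. p-1, i.e. over 'I_p *)
  [exists i : 'I_p,
     [forall i' : 'I_p, ((1 <= i') && (i' <= i))%N ==> (h i' <= t)] &&
     [exists B in parts i, (j \in B) && (j' \in B)]].

Definition Gr (parts : nat -> {set {set 'I_p}}) (h : nat -> R)
    (j : 'I_p) (r : R) : {set 'I_p} :=
  [set j' | (j' != j) && same_cluster parts h (1 - r) j j'].

Variable K : nat.

(* Phi_{T,L}(j) = (1/K) sum_k 1{j in C_{k,L}(T)} ; C T L k = C_{k,L}(T) *)
Definition Phi (C : nat -> nat -> 'I_K -> {set 'I_p}) (T L : nat) (j : 'I_p) : R :=
  K%:R^-1 * \sum_(k < K) (j \in C T L k)%:R.

Definition Psi_plus (C : nat -> nat -> 'I_K -> {set 'I_p})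
    (parts : nat -> {set {set 'I_p}}) (h : nat -> R) (T L : nat)
    (j : 'I_p) (r : R) : R :=
  let G := Gr parts h j r in
  if G == set0 then 1
  else (2 - fmin G (fun j' => `|Phi C T L j - Phi C T L j'|))^-1.

Definition V_plus (A : {set 'I_p}) (C : nat -> nat -> 'I_K -> {set 'I_p})
    (parts : nat -> {set {set 'I_p}}) (h : nat -> R) (T L : nat) (v r : R) : nat :=
  #|[set j | (j \notin A) && (v < Psi_plus C parts h T L j r * Phi C T L j)]|.

End TRex.

(* Main.v *)
Require Import Defs.
From HB Require Import structures.
From mathcomp Require Import all_boot all_order all_algebra.
From mathcomp Require Import ring lra zify.
Import Order.TTheory GRing.Theory Num.Theory.
Local Open Scope ring_scope.

Section Aux.
Variable R : realFieldType.

Lemma fmin_le (T : finType) (S : {set T}) (f : T -> R) i :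
  i \in S -> fmin S f <= f i.
Proof. by move=> iS; rewrite /fmin (bigD1 i) //= ge_min lexx. Qed.

Lemma fmax_ge (T : finType) (S : {set T}) (f : T -> R) i :
  i \in S -> f i <= fmax S f.
Proof. by move=> iS; rewrite /fmax (bigD1 i) //= le_max lexx. Qed.

Lemma fmax_ge0 (T : finType) (S : {set T}) (f : T -> R) : 0 <= fmax S f.
Proof.
rewrite /fmax; elim/big_rec: _ => //= i x _ hx.
by rewrite le_max hx orbT.
Qed.

Lemma fmin_ge (T : finType) (S : {set T}) (f : T -> R) m :
  (forall i, i \in S -> m <= f i) -> m <= fmax S f -> m <= fmin S f.
Proof.
move=> H Hs; rewrite /fmin; elim/big_ind: _ => //= x y hx hy.
by rewrite le_min hx.
Qed.

Lemma fmin_sub (T : finType) (S S' : {set T}) (f : T -> R) :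
  S' \subset S -> S' != set0 -> fmin S f <= fmin S' f.
Proof.
move=> sub /set0Pn [i0 i0S].
apply: fmin_ge => [i iS|].
  by apply: fmin_le; apply: (subsetP sub).
have h0 := fmax_ge _ _ _ _ i0S. apply: le_trans (h0 f).
by apply: fmin_le; apply: (subsetP sub).
Qed.

Lemma rho_abs_le1 n p (X : 'M[R]_(n, p)) j j' :
  standardized X -> `|rho X j j'| <= 1.
Proof.
move=> st; have [_ h1] := st j; have [_ h2] := st j'.
move: h1 h2; rewrite /rho => h1 h2.
have e1 : 0 <= \sum_(i < n) (X i j - X i j') ^+ 2 by apply: sumr_ge0 => i _; apply: sqr_ge0.
have e2 : 0 <= \sum_(i < n) (X i j + X i j') ^+ 2 by apply: sumr_ge0 => i _; apply: sqr_ge0.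
have E1 : \sum_(i < n) (X i j - X i j') ^+ 2 =
   \sum_(i < n) X i j * X i j - 2 * \sum_(i < n) X i j * X i j' + \sum_(i < n) X i j' * X i j'.
  rewrite mulr_sumr -sumrB -big_split /=; apply: eq_bigr => i _; ring.
have E2 : \sum_(i < n) (X i j + X i j') ^+ 2 =
   \sum_(i < n) X i j * X i j + 2 * \sum_(i < n) X i j * X i j' + \sum_(i < n) X i j' * X i j'.
  rewrite mulr_sumr -!big_split /=; apply: eq_bigr => i _; ring.
rewrite E1 h1 h2 in e1; rewrite E2 h1 h2 in e2.
rewrite ler_norml; apply/andP; split; lra.
Qed.


Lemma link_ge0 n p lk (X : 'M[R]_(n, p)) A B :
  standardized X -> 0 <= link lk X A B.
Proof.
move=> st; case: lk => /=.
- apply: fmin_ge => [q _|]; last exact: fmax_ge0.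
  by rewrite /dist subr_ge0 rho_abs_le1.
- exact: fmax_ge0.
- apply: divr_ge0; last exact: ler0n.
  by apply: sumr_ge0 => q _; rewrite /dist subr_ge0 rho_abs_le1.
Qed.

Lemma cval_mono (p : nat) (h : nat -> R) u :
  (forall i, (i < p.-1)%N -> 0 <= h i.+1) ->
  (1 <= u <= p.-1)%N -> cval p h u.+1 <= cval p h u.
Proof.
move=> hpos /andP[u1 up].
rewrite /cval; set s := sort _ _.
have sz : size s = p.-1 by rewrite size_sort /heights size_map size_iota.
have memge0 x : x \in s -> 0 <= x.
  rewrite mem_sort => /mapP [i]; rewrite mem_iota add0n => /andP[_ ip] ->.
  exact: hpos.
have u0 : (u == 0)%N = false by apply/eqP; lia.
have pu : (p <= u)%N = false by apply/negbTE; rewrite -ltnNge; lia.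
rewrite /= u0 pu.
case: ifP => pu1.
  apply: memge0; apply: mem_nth; rewrite sz; lia.
have tr : transitive (fun a b : R => b <= a) by move=> x y z /= h1 h2; apply: le_trans h2 h1.
have tot : total (fun a b : R => b <= a) by move=> x y; apply: le_total.
apply: (sorted_ltn_nth tr 0 (sort_sorted tot _)); rewrite ?inE -/s ?sz.
- lia.
- move: pu1 => /negbT; lia.
- lia.
Qed.

Lemma Phi_bounds p K (C : nat -> nat -> 'I_K -> {set 'I_p}) T L j :
  (1 <= K)%N -> 0 <= Phi R C T L j <= 1.
Proof.
move=> K1; rewrite /Phi; apply/andP; split.
  by apply: mulr_ge0; [rewrite invr_ge0 ler0n | apply: sumr_ge0 => k _; apply: ler0n].
have Kpos : (K%:R : R) != 0 by rewrite pnatr_eq0 -lt0n.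
apply: (@le_trans _ _ (K%:R^-1 * K%:R)); last by rewrite mulVf.
apply: ler_wpM2l; first by rewrite invr_ge0 ler0n.
apply: (@le_trans _ _ (\sum_(k < K) (1 : R))); last by rewrite sumr_const card_ord.
by apply: ler_sum => k _; case: (_ \in _).
Qed.

Lemma psi_gen (T : finType) (G G' : {set T}) (f : T -> R) :
  G' \subset G -> (forall i, f i <= 1) ->
  (if G == set0 then 1 else (2 - fmin G f)^-1) <=
  (if G' == set0 then 1 else (2 - fmin G' f)^-1).
Proof.
move=> sub f1.
have [G'0|G'n] := boolP (G' == set0).
  have [_|/set0Pn [i0 i0G]] := boolP (G == set0); first by [].
  have m1 : fmin G f <= f i0 by apply: fmin_le. have := f1 i0.
  move=> fi; rewrite invf_le1; [lra|lra].
have Gn : G != set0.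
  apply: contraNneq G'n => G0; apply/eqP; apply/setP => x; rewrite inE.
  by apply/negbTE/negP => /(subsetP sub); rewrite G0 inE.
rewrite (negbTE Gn).
have ms : fmin G f <= fmin G' f by apply: fmin_sub.
move: (G'n) => /set0Pn [i0 i0G]; have m1 : fmin G' f <= f i0 by apply: fmin_le. have := f1 i0 => fi.
rewrite lef_pV2 ?posrE; lra.
Qed.

End Aux.

Lemma Gr_sub (R : realFieldType) p (parts : nat -> {set {set 'I_p}}) (h : nat -> R) j r r' :
  1 - r' <= 1 - r -> Gr parts h j r' \subset Gr parts h j r.
Proof.
move=> le; apply/subsetP => x; rewrite !inE => /andP[-> /existsP [i /andP[/forallP H E]]] /=.
apply/existsP; exists i; rewrite E andbT; apply/forallP => i'.
by apply/implyP => /(implyP (H i')) hi; apply: le_trans le.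
Qed.

Theorem lemma2 (R : realFieldType) (n p K : nat)
    (X : 'M[R]_(n, p)) (y : 'cV[R]_n) (A : {set 'I_p})
    (C : nat -> nat -> 'I_K -> {set 'I_p})
    (lk : linkage) (parts : nat -> {set {set 'I_p}}) (h : nat -> R) :
  standardized X ->
  (1 <= K)%N ->
  agglo_run lk X parts h ->
  forall (T L : nat) (v : R) (u_cut : nat),
    (1 <= T <= L)%N -> (1 <= L)%N ->
    1 / 2 <= v -> v < 1 ->
    (1 <= u_cut <= p.-1)%N ->
    (V_plus A C parts h T L v (rho_thr p h u_cut)
       <= V_plus A C parts h T L v (rho_thr p h u_cut.+1))%N.
Proof.
move=> st K1 [_ run] T L v u _ _ _ _ hu.
have hpos : forall i, (i < p.-1)%N -> 0 <= h i.+1.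
  move=> i ip; have [A0 [B0 [_ _ _ ->]]] := run i ip; exact: link_ge0.
have cm : cval p h u.+1 <= cval p h u by apply: cval_mono.
have sub j : Gr parts h j (rho_thr p h u.+1) \subset Gr parts h j (rho_thr p h u).
  apply: Gr_sub; rewrite /rho_thr; lra.
apply: subset_leq_card; apply/subsetP => j; rewrite !inE => /andP[-> H] /=.
apply: (lt_le_trans H); apply: ler_wpM2r.
  by have /andP[] := @Phi_bounds R _ _ C T L j K1.
rewrite /Psi_plus; apply: psi_gen; first exact: sub.
move=> j'; have /andP[a0 a1] := @Phi_bounds R _ _ C T L j K1.
have /andP[b0 b1] := @Phi_bounds R _ _ C T L j' K1.
rewrite ler_norml; apply/andP; split; lra.
Qed.
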